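(* Let $G\le\mathrm{Aut}(\mathcal{T}_d)$ be a $d$-persistent self-similar group. Whenever two triples $(T_-,\sigma(g_1,\dots,g_n),T_+)$ and $(T_-',\sigma'(g_1',\dots,g_{n'}'),T_+')$ (with all $g_i,g_j'\in G$) represent the same element of $V_d(G)$, we have $g_n=g'_{n'}$.
   Context: Let $X=\{1,\dots,d\}$ ($d\ge2$) with its usual order; $X^*$ is the vertex set of the rooted $d$-ary tree $\mathcal{T}_d$ (root the empty word, $u$ adjacent to $ux$), ordered lexicographically. Every $f\in\mathrm{Aut}(\mathcal{T}_d)$ has a wreath recursion $f=\rho(f)(f_1,\dots,f_d)$ with $\rho(f)\in S_d$ and $f_i$ determined by $f(iw)=\rho(f)(i)f_i(w)$; the states of $f$ form the smallest set containing $f$ and closed under $f\mapsto f_i$. $G$ is self-similar if it contains all states of its elements, and $d$-persistent if $g_d=g$ for every $g\in G$ with wreath recursion $g=\rho(g)(g_1,\dots,g_d)$. With $X^\omega$ the infinite words, a triple $(T_-,\sigma(g_1,\dots,g_n),T_+)$ consists of finite complete rooted subtrees $T_-,T_+$ (rooted: contain the root; complete: $ux\in T$ implies $uy\in T$ for all $y$) with $n$ leaves $u_1,\dots,u_n$ resp. $v_1,\dots,v_n$ in lexicographic order, $\sigma\in S_n$, $g_i\in G$; it represents the homeomorphism of $X^\omega$ with $v_iw\mapsto u_{\sigma(i)}g_i(w)$. $V_d(G)$ is the group of all homeomorphisms so represented. *)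

(* Defs.v *)
From mathcomp Require Import all_boot all_fingroup.
Set Implicit Arguments. Unset Strict Implicit. Unset Printing Implicit Defensive.

(* Alphabet X = {1,...,d} is modelled by 'I_d = {0,...,d-1} with the usual
   order; letter k+1 of the paper is the ordinal k.  The letter d is the
   ordinal of value d.-1. *)
Definition word (d : nat) := seq 'I_d.
Definition infword (d : nat) := nat -> 'I_d.

Definition adj d (u v : word d) : Prop :=
  exists x : 'I_d, v = rcons u x \/ u = rcons v x.

Definition is_aut d (f : word d -> word d) : Prop :=
  bijective f /\ f [::] = [::] /\ forall u v, adj u v <-> adj (f u) (f v).

(* Wreath recursion: f(i w) = rho(f)(i) f_i(w); the state f_i is: *)
Definition section d (f : word d -> word d) (i : 'I_d) : word d -> word d :=
  fun w => behead (f (i :: w)).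

Definition is_aut_subgroup d (G : (word d -> word d) -> Prop) : Prop :=
  (forall g, G g -> is_aut g) /\
  G id /\
  (forall g h, G g -> G h -> G (g \o h)) /\
  (forall g, G g -> exists h, G h /\ h \o g =1 id /\ g \o h =1 id).

Definition self_similar d (G : (word d -> word d) -> Prop) : Prop :=
  forall g, G g -> forall i : 'I_d, G (section g i).

Definition d_persistent d (G : (word d -> word d) -> Prop) : Prop :=
  forall g, G g -> forall x : 'I_d, val x = d.-1 -> section g x = g.

Definition act d (g : word d -> word d) (w : infword d) : infword d :=
  fun n => nth (w 0) (g (mkseq w n.+1)) n.

Definition cat_inf d (u : word d) (w : infword d) : infword d :=
  fun n => if n < size u then nth (w 0) u n else w (n - size u).

Fixpoint lexlt d (u v : word d) : bool :=
  match u, v with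
  | [::], [::] => false
  | [::], _ :: _ => true
  | _ :: _, [::] => false
  | x :: u', y :: v' => (x < y) || ((x == y) && lexlt u' v')
  end.

Definition is_cr_subtree d (T : seq (word d)) : Prop :=
  [::] \in T /\
  (forall u (x : 'I_d), rcons u x \in T -> u \in T) /\
  (forall u (x y : 'I_d), rcons u x \in T -> rcons u y \in T).

Definition leaves_lex d (T : seq (word d)) (ls : seq (word d)) : Prop :=
  sorted (@lexlt d) ls /\
  forall u, u \in ls <-> (u \in T /\ forall x : 'I_d, rcons u x \notin T).

(* (T_-, sigma(g_1,...,g_n), T_+) is a triple over G, where us = (u_1..u_n)
   are the leaves of T_- and vs = (v_1..v_n) those of T_+. *)
Definition is_triple d (G : (word d -> word d) -> Prop)
  (Tm Tp us vs : seq (word d)) (sigma : 'S_(size vs))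
  (gs : seq (word d -> word d)) : Prop :=
  is_cr_subtree Tm /\ is_cr_subtree Tp /\
  leaves_lex Tm us /\ leaves_lex Tp vs /\
  size us = size vs /\ size gs = size vs /\
  (forall i, i < size gs -> G (nth id gs i)).

Definition represents d (us vs : seq (word d)) (sigma : 'S_(size vs))
  (gs : seq (word d -> word d)) (F : infword d -> infword d) : Prop :=
  forall (i : 'I_(size vs)) (w : infword d),
    F (cat_inf (nth [::] vs i) w) =
    cat_inf (nth [::] us (sigma i)) (act (nth id gs i) w).

Arguments is_triple {d} G Tm Tp us vs sigma gs.
Arguments represents {d} us vs sigma gs F.

(* Main.v *)
Require Import Defs.
From mathcomp Require Import all_boot all_fingroup.
From mathcomp Require Import zify.
From Stdlib Require Import FunctionalExtensionality.
Set Implicit Arguments. Unset Strict Implicit. Unset Printing Implicit Defensive.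

Lemma aut_size d (g : word d -> word d) : is_aut g -> forall u, size (g u) = size u.
Proof.
move=> [gb [g0 Hadj]].
have ginj : injective g := bij_inj gb.
suff H : forall n u, size u < n -> size (g u) = size u by move=> u; exact: (H (size u).+1).
elim=> [//|n IH] u.
case/lastP: u => [|u x]; first by rewrite g0.
rewrite size_rcons ltnS => Hs.
have Hu := IH u Hs.
have [y [E|E]] := (Hadj u (rcons u x)).1 (ex_intro _ x (or_introl erefl)).
  by rewrite E !size_rcons Hu.
exfalso.
case/lastP: u Hs Hu E => [|u' x'] Hs Hu E.
  by move: E; rewrite g0 => /(congr1 size); rewrite size_rcons.
have Hu' : size (g u') = size u' by apply: IH; rewrite size_rcons in Hs; lia.
have [y' [E'|E']] := (Hadj u' (rcons u' x')).1 (ex_intro _ x' (or_introl erefl)).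
  move: E; rewrite E' => /rcons_inj [] /ginj /(congr1 size).
  rewrite !size_rcons; lia.
move: E' => /(congr1 size); rewrite size_rcons Hu' Hu !size_rcons; lia.
Qed.

Lemma aut_rcons d (g : word d -> word d) : is_aut g ->
  forall u x, exists y, g (rcons u x) = rcons (g u) y.
Proof.
move=> A u x; have [gb [g0 Hadj]] := A.
have [y [E|E]] := (Hadj u (rcons u x)).1 (ex_intro _ x (or_introl erefl)).
  by exists y.
move: E => /(congr1 size); rewrite size_rcons !(aut_size A) size_rcons; lia.
Qed.

Lemma aut_prefix d (g : word d -> word d) : is_aut g ->
  forall u w, take (size u) (g (u ++ w)) = g u.
Proof.
move=> A u; elim/last_ind => [|w y IH]; first by rewrite cats0 -(aut_size A u) take_size.
rewrite -rcons_cat; have [z ->] := aut_rcons A (u ++ w) y.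
by rewrite -cats1 takel_cat ?IH // (aut_size A) size_cat leq_addr.
Qed.

Definition secw d (g : word d -> word d) (u : word d) : word d -> word d :=
  fun w => drop (size u) (g (u ++ w)).

Lemma mkseq_cat_lt d u (z : infword d) m : m <= size u -> mkseq (cat_inf u z) m = take m u.
Proof.
move=> Hm; apply: (@eq_from_nth _ (z 0)); first by rewrite size_mkseq size_takel.
move=> i; rewrite size_mkseq => Hi.
rewrite nth_mkseq // nth_take // /cat_inf.
by have -> : i < size u by apply: leq_trans Hm.
Qed.

Lemma mkseq_cat_ge d u (z : infword d) m : mkseq (cat_inf u z) (size u + m) = u ++ mkseq z m.
Proof.
apply: (@eq_from_nth _ (z 0)); first by rewrite size_mkseq size_cat size_mkseq.
move=> i; rewrite size_mkseq => Hi; rewrite nth_mkseq // nth_cat /cat_inf.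
case: ifP => // /negbT Hiu; rewrite nth_mkseq //; lia.
Qed.

Lemma act_cat d (g : word d -> word d) (A : is_aut g) u z n :
  Defs.act g (cat_inf u z) n = cat_inf (g u) (Defs.act (secw g u) z) n.
Proof.
have -> : cat_inf (g u) (Defs.act (secw g u) z) n = if n < size u then
  nth (Defs.act (secw g u) z 0) (g u) n else Defs.act (secw g u) z (n - size u).
  by rewrite /cat_inf (aut_size A).
case: (boolP (n < size u)) => Hn; rewrite /Defs.act.
  rewrite mkseq_cat_lt //.
  have E : g (take n.+1 u) = take n.+1 (g u).
    by rewrite -{2}(cat_take_drop n.+1 u) -{2}(@size_takel n.+1 _ u Hn) aut_prefix.
  rewrite E nth_take //; apply: set_nth_default; by rewrite (aut_size A).
rewrite (_ : n.+1 = size u + (n - size u).+1); last by move: Hn; lia.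
rewrite mkseq_cat_ge.
rewrite -{1}(cat_take_drop (size u) (g (u ++ _))) aut_prefix // nth_cat (aut_size A) (negbTE Hn).
rewrite /secw; apply: set_nth_default.
rewrite size_drop (aut_size A) size_cat size_mkseq; lia.
Qed.

Lemma cat_inf_cat d u v (z : infword d) n : cat_inf u (cat_inf v z) n = cat_inf (u ++ v) z n.
Proof.
rewrite /cat_inf size_cat nth_cat.
case: ifP => H1.
  have -> : n < size u + size v by lia.
  exact: set_nth_default.
case: ifP => H2.
  have -> : n < size u + size v by move/negbT: H1; lia.
  exact: set_nth_default.
have -> : (n < size u + size v) = false by apply/negbTE; move/negbT: H1; move/negbT: H2; lia.
by rewrite subnDA.
Qed.

Lemma secw_nseq d (g : word d -> word d) (dl : 'I_d) (Hg : section g dl = g) j :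
  secw g (nseq j dl) = g.
Proof.
elim: j => [|j IH]; apply: functional_extensionality => w; rewrite /secw /=.
  by rewrite drop0.
rewrite -{2}IH /secw size_nseq.
have := congr1 (fun f => f (nseq j dl ++ w)) Hg; rewrite /section => <-.
by move: (g (dl :: (nseq j dl ++ w))) => [|a s].
Qed.

Lemma shift_absurd d (hd : 2 <= d) (g g' : word d -> word d) (A : is_aut g) P Q
  (HAB : size P < size Q)
  (E : forall z, cat_inf P (Defs.act g z) = cat_inf Q (Defs.act g' z)) : False.
Proof.
have d0 : 0 < d by lia.
have d1 : 1 < d by lia.
pose x0 : 'I_d := Ordinal d0.
pose x1 : 'I_d := Ordinal d1.
have key : forall x : 'I_d, g [:: x] = [:: nth x0 Q (size P)].
  move=> x; have := congr1 (fun f => f (size P)) (E (fun _ => x)).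
  rewrite /cat_inf ltnn subnn HAB /Defs.act /= => H.
  rewrite (set_nth_default x0 _ HAB) in H; rewrite -H.
  by case: (g [:: x]) (aut_size A [:: x]) => [|a [|b s]].
have := key x0; rewrite -(key x1) => /(bij_inj A.1) [] //.
Qed.

Lemma act_ext d (g g' : word d -> word d) (A : is_aut g) (A' : is_aut g') (x0 : 'I_d) :
  (forall z n, Defs.act g z n = Defs.act g' z n) -> g = g'.
Proof.
move=> H; apply: functional_extensionality => w.
have rep : forall h, is_aut h -> h w = mkseq (Defs.act h (cat_inf w (fun _ => x0))) (size w).
  move=> h Ah; apply: (@eq_from_nth _ x0); first by rewrite size_mkseq (aut_size Ah).
  move=> i; rewrite (aut_size Ah) => Hi.
  rewrite nth_mkseq // act_cat // /cat_inf (aut_size Ah) Hi.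
  apply: set_nth_default; by rewrite (aut_size Ah).
rewrite (rep g A) (rep g' A'); apply: eq_mkseq => i; exact: H.
Qed.

Lemma prefix_closed d (T : seq (word d)) :
  (forall u (x : 'I_d), rcons u x \in T -> u \in T) -> forall u w, u ++ w \in T -> u \in T.
Proof.
move=> H u; elim/last_ind => [|w y IH]; first by rewrite cats0.
rewrite -rcons_cat => /H; exact: IH.
Qed.

Lemma lexlt_nseq d (dl : 'I_d) (Hdl : val dl = d.-1) k v :
  lexlt (nseq k dl) v -> exists x w, v = nseq k dl ++ x :: w.
Proof.
elim: k v => [|k IH] [|y v] //=.
  by move=> _; exists y, v.
case/orP => [H|/andP [/eqP <- /IH [x [w ->]]]].
  exfalso; have := ltn_ord y; rewrite Hdl in H; lia.
by exists x, w.
Qed.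

Lemma bound_size d (T : seq (word d)) u : u \in T -> size u <= foldr maxn 0 (map size T).
Proof.
elim: T => [//|a T IH]; rewrite inE => /orP [/eqP ->|/IH H] /=.
  exact: leq_maxl.
exact: leq_trans H (leq_maxr _ _).
Qed.

Lemma last_leaf d (dl : 'I_d) (Hdl : val dl = d.-1) T ls :
  is_cr_subtree T -> leaves_lex T ls -> exists k, 0 < size ls /\ last [::] ls = nseq k dl.
Proof.
move=> [T0 [Tpre Tcomp]] [Hsort Hls].
have exP : exists k, (fun k => nseq k dl \in T) k by exists 0.
have bP : forall k, (fun k => nseq k dl \in T) k -> k <= foldr maxn 0 (map size T).
  by move=> k /bound_size; rewrite size_nseq.
case: (ex_maxnP exP bP) => k Hk Hmax.
have leaf : forall x, rcons (nseq k dl) x \notin T.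
  move=> x; apply/negP => /(Tcomp _ _ dl).
  have -> : rcons (nseq k dl) dl = nseq k.+1 dl by elim: (k) => //= n ->.
  by move=> /Hmax; rewrite ltnn.
have inls : nseq k dl \in ls by apply/Hls.
exists k; split.
  by rewrite lt0n size_eq0; apply/eqP => E; rewrite E in inls.
set i := index (nseq k dl) ls.
have ilt : i < size ls by rewrite index_mem.
have ni : nth [::] ls i = nseq k dl by rewrite nth_index.
have ige : size ls <= i.+1.
  rewrite leqNgt; apply/negP => Hi.
  have := (sortedP [::] Hsort) i Hi; rewrite ni => /(lexlt_nseq Hdl) [x [w Ev]].
  have : nth [::] ls i.+1 \in ls by apply: mem_nth.
  move=> /Hls [] + _; rewrite Ev -cat_rcons => /(prefix_closed Tpre).
  by apply/negP.
rewrite -nth_last (_ : (size ls).-1 = i) //; lia.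
Qed.

Lemma core d (dl : 'I_d) (Hdl : val dl = d.-1) (hd : 2 <= d)
  (G : (word d -> word d) -> Prop) (HG : is_aut_subgroup G) (Hpers : d_persistent G)
  g g' u u' k k' (F : infword d -> infword d) (Gg : G g) (Gg' : G g') (kk : k <= k')
  (E1 : forall z, F (cat_inf (nseq k dl) z) = cat_inf u (Defs.act g z))
  (E2 : forall z, F (cat_inf (nseq k' dl) z) = cat_inf u' (Defs.act g' z)) : g = g'.
Proof.
have A : is_aut g := HG.1 g Gg.
have A' : is_aut g' := HG.1 g' Gg'.
have Hsec : section g dl = g := Hpers g Gg dl Hdl.
set j := k' - k.
set B := u ++ g (nseq j dl).
have E : forall z, cat_inf B (Defs.act g z) = cat_inf u' (Defs.act g' z).
  move=> z; rewrite -E2 (_ : k' = k + j); last by rewrite /j; lia.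
  rewrite nseqD.
  have -> : cat_inf (nseq k dl ++ nseq j dl) z = cat_inf (nseq k dl) (cat_inf (nseq j dl) z).
    by apply: functional_extensionality => n; rewrite cat_inf_cat.
  rewrite E1.
  have -> : Defs.act g (cat_inf (nseq j dl) z) = cat_inf (g (nseq j dl)) (Defs.act g z).
    by apply: functional_extensionality => n; rewrite act_cat // secw_nseq.
  by apply: functional_extensionality => n; rewrite cat_inf_cat.
case: (ltngtP (size B) (size u')) => Hs.
- exfalso; exact: (shift_absurd hd A Hs E).
- exfalso; apply: (shift_absurd hd A' Hs) => z; by rewrite -E.
- apply: (act_ext A A' dl) => z n.
  have := congr1 (fun f => f (size B + n)) (E z).
  by rewrite /cat_inf -Hs ltnNge leq_addr /= addKn.
Qed.

Theorem lemma5p4 (d : nat) (hd : 2 <= d)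
  (G : (word d -> word d) -> Prop)
  (HG : is_aut_subgroup G) (Hss : self_similar G) (Hpers : d_persistent G)
  (Tm Tp us vs : seq (word d)) (sigma : 'S_(size vs))
  (gs : seq (word d -> word d))
  (Tm' Tp' us' vs' : seq (word d)) (sigma' : 'S_(size vs'))
  (gs' : seq (word d -> word d))
  (H1 : is_triple G Tm Tp us vs sigma gs)
  (H2 : is_triple G Tm' Tp' us' vs' sigma' gs')
  (F : infword d -> infword d)
  (R1 : represents us vs sigma gs F)
  (R2 : represents us' vs' sigma' gs' F) :
  last id gs = last id gs'.
Proof.
have dlt : d.-1 < d by rewrite ltn_predL; lia.
pose dl : 'I_d := Ordinal dlt.
have Hdl : val dl = d.-1 by [].
case: H1 => [HTm [HTp [Hus [Hvs [Hsz [Hgs HG1]]]]]].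
case: H2 => [HTm' [HTp' [Hus' [Hvs' [Hsz' [Hgs' HG1']]]]]].
have [k [vs0 Lk]] := last_leaf Hdl HTp Hvs.
have [k' [vs0' Lk']] := last_leaf Hdl HTp' Hvs'.
have i_lt : (size vs).-1 < size vs by rewrite ltn_predL.
have i_lt' : (size vs').-1 < size vs' by rewrite ltn_predL.
have Gg : G (last id gs).
  by rewrite -nth_last; apply: HG1; rewrite ltn_predL Hgs.
have Gg' : G (last id gs').
  by rewrite -nth_last; apply: HG1'; rewrite ltn_predL Hgs'.
have E1 : forall z, F (cat_inf (nseq k dl) z) =
   cat_inf (nth [::] us (sigma (Ordinal i_lt))) (Defs.act (last id gs) z).
  move=> z; have := R1 (Ordinal i_lt) z.
  have eg : nth id gs (size vs).-1 = last id gs by rewrite -Hgs nth_last.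
  by rewrite /= nth_last Lk eg.
have E2 : forall z, F (cat_inf (nseq k' dl) z) =
   cat_inf (nth [::] us' (sigma' (Ordinal i_lt'))) (Defs.act (last id gs') z).
  move=> z; have := R2 (Ordinal i_lt') z.
  have eg : nth id gs' (size vs').-1 = last id gs' by rewrite -Hgs' nth_last.
  by rewrite /= nth_last Lk' eg.
case: (leqP k k') => Hk.
  exact: (core Hdl hd HG Hpers Gg Gg' Hk E1 E2).
apply/esym; exact: (core Hdl hd HG Hpers Gg' Gg (ltnW Hk) E2 E1).
Qed.
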